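(* Let $S$ be an optimal $n$-town. Then the centers of all rows of $S$ of odd cardinality lie on a common vertical grid line $V_o$ (a line $x=a$ with $a\in\mathbb{Z}$), and the centers of all rows of $S$ of even cardinality lie on a common vertical line $V_e$ at distance $\frac12$ from $V_o$. Similarly, the centers of all columns of odd cardinality lie on a common horizontal grid line $H_o$, and the centers of all columns of even cardinality lie on a common horizontal line $H_e$ at distance $\frac12$ from $H_o$. Moreover, without changing its cost, $S$ can be moved by a translation and a rotation by a multiple of $90^\circ$ so that $H_o$ becomes the $x$-axis, $V_o$ becomes the $y$-axis, and $H_e$ and $V_e$ lie in the negative half-planes (i.e., $H_e$ is the line $y=-\frac12$ and $V_e$ is the line $x=-\frac12$).
   Context: An $n$-town is a set $S\subset\mathbb{Z}\times\mathbb{Z}$ of exactly $n$ distinct grid points; its cost is $c(S)=\frac12\sum_{s\in S}\sum_{t\in S}\|s-t\|_1$ (Manhattan distance), and it is optimal if its cost is minimum among all $n$-towns. For $i\in\mathbb{Z}$, the $i$-th column of $S$ is $C_i=\{(i,y)\in S: y\in\mathbb{Z}\}$ and the $i$-th row is $R_i=\{(x,i)\in S: x\in\mathbb{Z}\}$. The length of a row or column is its cardinality. The center of a nonempty row is the point midway between its leftmost and rightmost points; the center of a nonempty column is the point midway between its lowest and highest points. *)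

(* Defs.v *)
From mathcomp Require Import all_boot all_order all_algebra.
Set Implicit Arguments. Unset Strict Implicit. Unset Printing Implicit Defensive.
Import Order.TTheory GRing.Theory Num.Theory.
Local Open Scope ring_scope.

(* Grid points are pairs of integers; a finite set of grid points is
   represented by a duplicate-free sequence. *)
Definition point := (int * int)%type.

Definition is_town (n : nat) (S : seq point) : Prop :=
  uniq S /\ size S = n.

Definition l1dist (s t : point) : int := `|s.1 - t.1| + `|s.2 - t.2|.

Definition cost (S : seq point) : rat :=
  ((\sum_(s <- S) \sum_(t <- S) l1dist s t)%:~R) / 2.

Definition optimal (n : nat) (S : seq point) : Prop :=
  is_town n S /\ forall T, is_town n T -> cost S <= cost T.

Definition tcol (S : seq point) (i : int) : seq point :=
  [seq p <- S | p.1 == i].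
Definition trow (S : seq point) (i : int) : seq point :=
  [seq p <- S | p.2 == i].

Definition seq_min (xs : seq int) : int := foldr Num.min (head 0 xs) xs.
Definition seq_max (xs : seq int) : int := foldr Num.max (head 0 xs) xs.

Definition row_center (S : seq point) (i : int) : rat * rat :=
  let xs := map fst (trow S i) in
  (((seq_min xs + seq_max xs)%:~R) / 2, i%:~R).

Definition column_center (S : seq point) (i : int) : rat * rat :=
  let ys := map snd (tcol S i) in
  (i%:~R, ((seq_min ys + seq_max ys)%:~R) / 2).

Definition rot90 (p : point) : point := (- p.2, p.1).

Definition rigid (k : nat) (a b : int) (p : point) : point :=
  let q := iter k rot90 p in (q.1 + a, q.2 + b).

(* Main.v *)
Require Import Defs.
From mathcomp Require Import all_boot all_order all_algebra.
From mathcomp Require Import zify ring lra.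
Import Order.TTheory GRing.Theory Num.Theory.
Local Open Scope ring_scope.

Definition D (X Y : seq int) : int := \sum_(x <- X) \sum_(y <- Y) `|x - y|.
Definition Iv (l : int) (p : nat) : seq int := [seq l + (j%:Z) | j <- iota 0 p].
Definition J (p : nat) : seq int := Iv (- (p./2)%:Z) p.
Definition mm (p q : nat) : int := D (J p) (J q).

Lemma D_perm X X' Y Y' : perm_eq X X' -> perm_eq Y Y' -> D X Y = D X' Y'.
Proof.
move=> pX pY; rewrite /D (perm_big _ pX); apply: eq_bigr => x _.
exact: perm_big.
Qed.
Arguments D_perm {X X' Y Y'}.

Lemma D_sym X Y : D X Y = D Y X.
Proof.
rewrite /D exchange_big; apply: eq_bigr => y _; apply: eq_bigr => x _.
exact: distrC.
Qed.

Lemma D_cons x X Y : D (x :: X) Y = \sum_(y <- Y) `|x - y| + D X Y.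
Proof. by rewrite /D big_cons. Qed.

Lemma D_ge0 X Y : 0 <= D X Y.
Proof. by apply: sumr_ge0 => x _; apply: sumr_ge0 => y _. Qed.

Lemma mm_sym p q : mm p q = mm q p.
Proof. exact: D_sym. Qed.

Lemma sum_ge (Y : seq int) (f : int -> int) (c : int) :
  (forall y, y \in Y -> c <= f y) -> (size Y)%:Z * c <= \sum_(y <- Y) f y.
Proof.
elim: Y => [|y Y IH] H; first by rewrite big_nil mul0r.
rewrite big_cons /= -addn1 PoszD mulrDl mul1r addrC.
apply: lerD; first by apply: H; rewrite inE eqxx.
by apply: IH => z hz; apply: H; rewrite inE hz orbT.
Qed.

Lemma sum_ge2 (Y : seq int) (f : int -> int) (c d : int) y0 :
  (forall y, y \in Y -> c <= f y) -> y0 \in Y -> c + d <= f y0 ->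
  (size Y)%:Z * c + d <= \sum_(y <- Y) f y.
Proof.
elim: Y => [|y Y IH] H //= hy0 hf.
rewrite big_cons -addn1 PoszD mulrDl mul1r.
move: hy0; rewrite inE => /orP [/eqP e|hy].
  subst y0; have := @sum_ge Y f c (fun z hz => H z (mem_behead (s:=y::Y) hz)); move: hf; set s := \sum_(_ <- _) _; set k := (_ * c); lia.
have := IH (fun z hz => H z (mem_behead (s:=y::Y) hz)) hy hf.
have := H y (mem_head _ _); set s := \sum_(_ <- _) _; set k := (_ * c); lia.
Qed.

Lemma sum_eqc (Y : seq int) (f : int -> int) (c : int) :
  (forall y, y \in Y -> f y = c) -> \sum_(y <- Y) f y = (size Y)%:Z * c.
Proof.
elim: Y => [|y Y IH] H; first by rewrite big_nil mul0r.
rewrite big_cons /= -addn1 PoszD mulrDl mul1r addrC IH.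
  by rewrite H // mem_head.
by move=> z hz; apply: H; rewrite inE hz orbT.
Qed.

Lemma size_Iv l p : size (Iv l p) = p.
Proof. by rewrite size_map size_iota. Qed.

Lemma mem_Iv l p x : (x \in Iv l p) = (l <= x) && (x < l + p%:Z).
Proof.
apply/mapP/idP.
  by case=> j; rewrite mem_iota => /andP [_ hj] ->; lia.
move=> /andP [h1 h2]; exists `|x - l|%N.
  rewrite mem_iota; lia.
lia.
Qed.

Lemma uniq_Iv l p : uniq (Iv l p).
Proof.
rewrite map_inj_uniq ?iota_uniq //.
by move=> a b /addrI [].
Qed.

Lemma Iv_S l p : Iv l p.+1 = l :: Iv (l+1) p.
Proof.
rewrite /Iv /= addr0; congr (_ :: _).
rewrite -(addn0 1%N) iotaDl -map_comp; apply: eq_map => j /=.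
rewrite PoszD; lia.
Qed.

Lemma Iv_rcons l p : Iv l p.+1 = rcons (Iv l p) (l + p%:Z).
Proof. by rewrite /Iv -addn1 iotaD map_cat cats1. Qed.

Lemma Iv_split l p : (2 <= p)%N ->
  perm_eq (Iv l p) (l :: (l + (p%:Z - 1)) :: Iv (l + 1) (p - 2)).
Proof.
case: p => [|[|q]] // _.
rewrite Iv_S Iv_rcons /= perm_cons subn2 /=.
have -> : l + (q.+2%:Z - 1) = l + 1 + q%:Z by lia.
by rewrite -cats1 perm_catC.
Qed.

Lemma foldr_min (z : int) xs :
  ((foldr Num.min z xs == z) || (foldr Num.min z xs \in xs)) /\
  foldr Num.min z xs <= z /\ forall x, x \in xs -> foldr Num.min z xs <= x.
Proof.
elim: xs => [|y xs [IH1 [IH2 IH3]]] /=; first by rewrite eqxx.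
split; last split.
- move: IH1; rewrite inE; set v := foldr _ _ _.
  case: (leP y v) => h; rewrite ?eqxx ?orbT //.
  by move=> /orP [->|->]; rewrite ?orbT.
- by rewrite ge_min IH2 orbT.
- move=> x; rewrite inE => /orP [/eqP ->|hx]; first by rewrite ge_min lexx.
  by rewrite ge_min IH3 ?orbT.
Qed.

Lemma foldr_max (z : int) xs :
  ((foldr Num.max z xs == z) || (foldr Num.max z xs \in xs)) /\
  z <= foldr Num.max z xs /\ forall x, x \in xs -> x <= foldr Num.max z xs.
Proof.
elim: xs => [|y xs [IH1 [IH2 IH3]]] /=; first by rewrite eqxx.
split; last split.
- move: IH1; rewrite inE; set v := foldr _ _ _.
  case: (leP y v) => h; rewrite ?eqxx ?orbT //.
  by move=> /orP [->|->]; rewrite ?orbT.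
- by rewrite le_max IH2 orbT.
- move=> x; rewrite inE => /orP [/eqP ->|hx]; first by rewrite le_max lexx.
  by rewrite le_max IH3 ?orbT.
Qed.

Lemma seq_minP (xs : seq int) : xs != [::] ->
  seq_min xs \in xs /\ forall x, x \in xs -> seq_min xs <= x.
Proof.
case: xs => [|y ys] // _; move: (foldr_min y (y :: ys)).
rewrite /seq_min /= => -[h1 [h2 h3]].
split=> //; move: h1 => /orP [/eqP ->|//]; exact: mem_head.
Qed.

Lemma seq_maxP (xs : seq int) : xs != [::] ->
  seq_max xs \in xs /\ forall x, x \in xs -> x <= seq_max xs.
Proof.
case: xs => [|y ys] // _; move: (foldr_max y (y :: ys)).
rewrite /seq_max /= => -[h1 [h2 h3]].
split=> //; move: h1 => /orP [/eqP ->|//]; exact: mem_head.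
Qed.

Lemma seq_min_eq (xs : seq int) (m : int) : m \in xs -> (forall x, x \in xs -> m <= x) -> seq_min xs = m.
Proof.
move=> hm hle; have hne : xs != [::] by move: hm; case: (xs).
have [h1 h2] := seq_minP _ hne.
by apply/eqP; rewrite eq_le h2 // hle.
Qed.

Lemma seq_max_eq (xs : seq int) (m : int) : m \in xs -> (forall x, x \in xs -> x <= m) -> seq_max xs = m.
Proof.
move=> hm hle; have hne : xs != [::] by move: hm; case: (xs).
have [h1 h2] := seq_maxP _ hne.
by apply/eqP; rewrite eq_le h2 // hle.
Qed.

Lemma seq_min_Iv (xs : seq int) l p : (0 < p)%N -> perm_eq xs (Iv l p) ->
  seq_min xs = l /\ seq_max xs = l + p%:Z - 1.
Proof.
move=> hp pe; have hm := perm_mem pe.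
split.
  apply: seq_min_eq; first by rewrite hm mem_Iv; lia.
  by move=> x; rewrite hm mem_Iv; lia.
apply: seq_max_eq; first by rewrite hm mem_Iv; lia.
by move=> x; rewrite hm mem_Iv; lia.
Qed.

Lemma size_bound (X : seq int) (lo hi : int) : uniq X -> lo <= hi + 1 ->
  (forall x, x \in X -> lo <= x <= hi) -> (size X)%:Z <= hi - lo + 1.
Proof.
move=> uX hlh hX.
have := uniq_leq_size (s2 := Iv lo (absz (hi - lo + 1))) uX.
rewrite size_Iv => H.
have : (size X <= absz (hi - lo + 1)%R)%N.
  apply: H => x hx; rewrite mem_Iv; have := hX x hx; lia.
lia.
Qed.

Lemma range_X (X : seq int) : uniq X -> X != [::] ->
  (forall x, x \in X -> seq_min X <= x <= seq_max X) /\
  (size X)%:Z <= seq_max X - seq_min X + 1.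
Proof.
move=> uX hne; have [h1 h2] := seq_minP _ hne; have [h3 h4] := seq_maxP _ hne.
have hr : forall x, x \in X -> seq_min X <= x <= seq_max X.
  by move=> x hx; rewrite h2 // h4.
split=> //; apply: size_bound => //.
have := hr _ h1; lia.
Qed.

Lemma split_ends (X : seq int) : uniq X -> (2 <= size X)%N ->
  exists X', perm_eq X (seq_min X :: seq_max X :: X') /\ uniq X' /\
             size X' = (size X - 2)%N.
Proof.
move=> uX hs; have hne : X != [::] by case: (X) hs.
have [h1 h2] := seq_minP _ hne; have [h3 h4] := seq_maxP _ hne.
have [hr hb] := range_X _ uX hne.
have hneq : seq_max X != seq_min X by apply/eqP => e; move: hb; rewrite e; lia.
have hm : seq_max X \in rem (seq_min X) X by rewrite (mem_rem_uniq _ uX) inE hneq h3.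
exists (rem (seq_max X) (rem (seq_min X) X)); split; last split.
- apply: perm_trans (perm_to_rem h1) _; rewrite perm_cons.
  exact: perm_to_rem.
- by do 2 apply: rem_uniq.
- by rewrite size_rem // size_rem // -!subn1 -subnDA.
Qed.

Lemma sum_ends (Y : seq int) (a b : int) : a <= b ->
  (size Y)%:Z * (b - a) <= \sum_(y <- Y) (`|a - y| + `|b - y|).
Proof. by move=> hab; apply: sum_ge => y _; lia. Qed.

Lemma D_ends a b X Y :
  D (a :: b :: X) Y = \sum_(y <- Y) (`|a - y| + `|b - y|) + D X Y.
Proof. by rewrite !D_cons big_split /= addrA. Qed.

Lemma mm_rec p q : (q <= p)%N -> (2 <= p)%N ->
  mm p q = mm (p - 2) q + (q%:Z) * (p%:Z - 1).
Proof.
move=> hqp hp; rewrite /mm /J.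
rewrite (D_perm (Iv_split _ _ hp) (perm_refl _)) D_ends addrC; congr (_ + _).
  by congr D; congr Iv; lia.
rewrite (@sum_eqc _ _ (p%:Z - 1)) ?size_Iv //.
move=> y; rewrite mem_Iv => hy.
have h1 : (q./2 <= p./2)%N by lia.
have h2 : (q - q./2 <= p - p./2)%N by lia.
lia.
Qed.

Lemma mm_small p q : (p <= 1)%N -> (q <= 1)%N -> mm p q = 0.
Proof.
case: p => [|[|p]] hp; try (by []); case: q => [|[|q]] hq; try (by []);
by rewrite /mm /J /Iv /D /= ?big_cons ?big_nil.
Qed.

Lemma lb N : forall X Y : seq int, (size X + size Y <= N)%N -> uniq X -> uniq Y ->
  mm (size X) (size Y) <= D X Y.
Proof.
elim: N => [|N IH] X Y.
  move=> hs _ _; have h1 : size X = 0%N by lia.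
  by rewrite h1 mm_small //; [apply: D_ge0 | lia].
have key : forall X Y : seq int, (size X + size Y <= N.+1)%N -> uniq X -> uniq Y ->
   (size Y <= size X)%N -> mm (size X) (size Y) <= D X Y.
  move=> {}X {}Y hs uX uY hyx.
  case: (leqP 2 (size X)) => hp; last by rewrite mm_small ?D_ge0 //; lia.
  have [X' [pX [uX' sX']]] := split_ends _ uX hp.
  have hne : X != [::] by case: (X) hp.
  have [_ hb] := range_X _ uX hne.
  rewrite (D_perm pX (perm_refl Y)) D_ends (mm_rec _ _ hyx hp) addrC.
  apply: lerD; last first.
    by rewrite -sX'; apply: IH => //; lia.
  apply: (le_trans _ (sum_ends Y (seq_min X) (seq_max X) _)); last by lia.
  by apply: ler_wpM2l => //; lia.
move=> hs uX uY; case: (leqP (size Y) (size X)) => h; first exact: key.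
rewrite D_sym mm_sym; apply: key => //; lia.
Qed.

Lemma diag (X : seq int) : uniq X -> (1 <= size X)%N ->
  D X X <= mm (size X) (size X) -> perm_eq X (Iv (seq_min X) (size X)).
Proof.
move=> uX hp hD.
have hne : X != [::] by case: (X) hp.
have [hr hb] := range_X _ uX hne.
suff hle : seq_max X - seq_min X + 1 <= (size X)%:Z.
  apply: uniq_perm => //; first exact: uniq_Iv.
  have := uniq_min_size (s2 := Iv (seq_min X) (size X)) uX.
  rewrite size_Iv => H; apply: (H _ _).2 => // x hx.
  by rewrite mem_Iv; have := hr x hx; lia.
case: (leqP 2 (size X)) => h2; last first.
  have [x ->] : exists x, X = [:: x] by case: (X) hp h2 => [|x [|]] //; exists x.
  by rewrite /seq_max /seq_min /= maxxx minxx; lia.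
have [X' [pX [uX' sX']]] := split_ends _ uX h2.
move: hD; rewrite (D_perm pX (perm_refl X)) D_ends.
rewrite (@sum_eqc _ _ (seq_max X - seq_min X)); last by move=> y /hr; lia.
rewrite (mm_rec _ _ (leqnn _) h2).
have := lb (size X' + size X) X' X (leqnn _) uX' uX.
rewrite sX' => hl hD.
have : (size X)%:Z * (seq_max X - seq_min X) <= (size X)%:Z * ((size X)%:Z - 1).
  move: hl hD; set a := mm _ _; set b := D _ _; set u := _ * (_ - seq_min X);
  set v := _ * (_ - 1); lia.
rewrite ler_pM2l; last by lia.
lia.
Qed.

Lemma strict N : forall (p q : nat) (l1 l2 : int), (p + q <= N)%N ->
  (1 <= p)%N -> (1 <= q)%N ->
  2 <= `|(2 * l1 + p%:Z) - (2 * l2 + q%:Z)| ->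
  mm p q + 1 <= D (Iv l1 p) (Iv l2 q).
Proof.
elim: N => [|N IH] p q l1 l2; first by lia.
have key : forall (p q : nat) (l1 l2 : int), (p + q <= N.+1)%N ->
  (1 <= p)%N -> (1 <= q)%N -> (q <= p)%N ->
  2 <= `|(2 * l1 + p%:Z) - (2 * l2 + q%:Z)| ->
  mm p q + 1 <= D (Iv l1 p) (Iv l2 q).
  move=> {}p {}q {}l1 {}l2 hs hp hq hqp hc.
  case: (leqP 2 p) => h2; last first.
    have e1 : p = 1%N by lia.
    have e2 : q = 1%N by lia.
    subst p q; rewrite mm_small // /D /Iv /= !big_cons !big_nil; lia.
  rewrite (D_perm (Iv_split _ _ h2) (perm_refl _)) D_ends (mm_rec _ _ hqp h2).
  have hl := lb (size (Iv (l1 + 1) (p - 2)) + size (Iv l2 q)) _ _ (leqnn _)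
     (uniq_Iv (l1+1) (p-2)) (uniq_Iv l2 q).
  rewrite !size_Iv in hl.
  have [hin|hout] := boolP ((l1 <= l2) && (l2 + q%:Z <= l1 + p%:Z)).
    rewrite (@sum_eqc _ _ (p%:Z - 1)); last first.
      by move=> y; rewrite mem_Iv; move: hin; lia.
    rewrite size_Iv.
    case: (leqP 3 p) => h3; last first.
      exfalso; have e : p = 2%N by lia.
      subst p; move: hin hc; lia.
    have := IH (p - 2)%N q (l1 + 1) l2 ltac:(lia) ltac:(lia) hq ltac:(lia).
    set a := mm _ _; set b := D _ _; set u := (_ * _); lia.
  have := @sum_ge2 (Iv l2 q) (fun y => `|l1 - y| + `|l1 + (p%:Z - 1) - y|)
     (p%:Z - 1) 2 (if l2 < l1 then l2 else l2 + q%:Z - 1).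
  rewrite size_Iv; move=> H.
  have {}H := H ltac:(move=> y _; lia).
  have {}H := H ltac:(rewrite mem_Iv; case: ifP; lia).
  have {}H := H ltac:(move: hout; case: ifP; lia).
  move: H hl; set a := mm _ _; set b := D _ _; set u := (_ * _);
  set s := \sum_(_ <- _) _; lia.
move=> hs hp hq hc; case: (leqP q p) => h; first exact: key.
rewrite D_sym mm_sym; apply: key => //; lia.
Qed.

Lemma sumc (T : Type) (Y : seq T) (c : int) : \sum_(y <- Y) c = (size Y)%:Z * c.
Proof.
elim: Y => [|y Y IH]; first by rewrite big_nil mul0r.
by rewrite big_cons IH /= -addn1 PoszD mulrDl mul1r addrC.
Qed.

Lemma sum_rows (R : Type) (idx : R) (op : Monoid.com_law idx)
  (S : seq point) (Us : seq int) (F : point -> R) :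
  uniq Us -> (forall s, s \in S -> s.2 \in Us) ->
  \big[op/idx]_(s <- S) F s = \big[op/idx]_(i <- Us) \big[op/idx]_(s <- trow S i) F s.
Proof.
move=> uU hS.
under [RHS]eq_bigr => i _ do rewrite /trow big_filter big_mkcond.
rewrite exchange_big /=; apply: eq_big_seq => s hs.
rewrite -big_mkcond -big_filter.
have -> : [seq i <- Us | s.2 == i] = [:: s.2].
  rewrite -(filter_pred1_uniq uU (hS _ hs)); apply: eq_filter => i /=.
  by rewrite eq_sym.
by rewrite big_seq1.
Qed.
Arguments sum_rows {R idx op S Us} F.

Definition tot (S : seq point) : int := \sum_(s <- S) \sum_(t <- S) l1dist s t.
Definition W (S : seq point) (i j : int) : int :=
  \sum_(s <- trow S i) \sum_(t <- trow S j) l1dist s t.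
Definition Xr (S : seq point) (i : int) : seq int := map fst (trow S i).
Definition psz (S : seq point) (i : int) : nat := size (trow S i).

Lemma tot_rows (S : seq point) (Us : seq int) : uniq Us -> (forall s, s \in S -> s.2 \in Us) ->
  tot S = \sum_(i <- Us) \sum_(j <- Us) W S i j.
Proof.
move=> uU hS; rewrite /tot (sum_rows _ uU hS); apply: eq_bigr => i _.
under eq_bigr => s _ do rewrite (sum_rows _ uU hS).
by rewrite exchange_big.
Qed.

Lemma mem_trow S i s : s \in trow S i -> s \in S /\ s.2 = i.
Proof. by rewrite /trow mem_filter => /andP [/eqP -> ->]. Qed.

Lemma W_eq S i j :
  W S i j = D (Xr S i) (Xr S j) + ((psz S i)%:Z * (psz S j)%:Z) * `|i - j|.
Proof.
rewrite /W /D /Xr /psz big_map.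
have -> : \sum_(s <- trow S i) \sum_(t <- trow S j) l1dist s t =
          \sum_(s <- trow S i) (\sum_(y <- [seq i0.1 | i0 <- trow S j]) `|s.1 - y|
                                + (size (trow S j))%:Z * `|i - j|).
  apply: eq_big_seq => s /mem_trow [_ hs].
  rewrite big_map -sumc -big_split /=; apply: eq_big_seq => t /mem_trow [_ ht].
  by rewrite /l1dist hs ht.
by rewrite big_split /= sumc mulrA.
Qed.

Definition blk (p : nat) (i : int) : seq point := [seq (x, i) | x <- J p].
Definition town_of (Us : seq int) (ps : int -> nat) : seq point :=
  flatten [seq blk (ps i) i | i <- Us].

Lemma town_mem Us ps s : s \in town_of Us ps -> s.2 \in Us.
Proof.
elim: Us => [|j Us IH] //=; rewrite mem_cat => /orP [|/IH]; last first.
  by rewrite inE => ->; rewrite orbT.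
by move=> /mapP [x _ ->]; rewrite /= mem_head.
Qed.

Lemma town_uniq Us ps : uniq Us -> uniq (town_of Us ps).
Proof.
elim: Us => [|j Us IH] //= /andP [hj uU]; rewrite cat_uniq IH // andbT.
apply/andP; split.
  by rewrite map_inj_uniq ?uniq_Iv // => x y [].
apply/hasPn => s /town_mem hs; apply/negP => /mapP [x _ e].
by move: hj; rewrite -(_ : s.2 = j) ?hs // e.
Qed.

Lemma town_size Us ps : size (town_of Us ps) = \sum_(i <- Us) ps i.
Proof.
elim: Us => [|j Us IH]; first by rewrite big_nil.
by rewrite /= size_cat IH big_cons size_map size_Iv.
Qed.

Lemma town_cons j Us ps : town_of (j :: Us) ps = blk (ps j) j ++ town_of Us ps.
Proof. by []. Qed.

Lemma trow_cat A B i : trow (A ++ B) i = trow A i ++ trow B i.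
Proof. exact: filter_cat. Qed.

Lemma town_trow Us ps i : uniq Us -> i \in Us -> trow (town_of Us ps) i = blk (ps i) i.
Proof.
elim: Us => [|j Us IH] // /andP [hj uU]; rewrite inE => hi.
rewrite town_cons trow_cat.
have [e|ne] := eqVneq j i.
  subst j; rewrite (_ : trow (town_of Us ps) i = [::]).
    rewrite cats0; apply/all_filterP/allP => s /mapP [x _ ->] /=; exact: eqxx.
  apply/eqP; rewrite -size_eq0 size_filter; apply/eqP.
  rewrite -(count_pred0 (town_of Us ps)); apply: eq_in_count => s /town_mem hs /=.
  by apply/negbTE/eqP => e; move: hj; rewrite -e hs.
move: hi; rewrite eq_sym (negPf ne) /= => hi.
rewrite IH //.
have -> : trow (blk (ps j) j) i = [::].
  apply/eqP; rewrite -size_eq0 size_filter; apply/eqP; rewrite -(count_pred0 (blk (ps j) j)).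
  apply: eq_in_count => s /mapP [x _ ->] /=; exact: negPf.
by [].
Qed.

Definition Uy (S : seq point) : seq int := undup (map snd S).

Lemma uniq_Xr S i : uniq S -> uniq (Xr S i).
Proof.
move=> uS; rewrite /Xr map_inj_in_uniq ?filter_uniq //.
move=> [x1 y1] [x2 y2] /mem_trow [_ /= ->] /mem_trow [_ /= ->] /= ->.
by [].
Qed.

Lemma Uy_mem S s : s \in S -> s.2 \in Uy S.
Proof. by move=> hs; rewrite mem_undup; apply: map_f. Qed.

Lemma Uy_psz S i : (i \in Uy S) = (0 < psz S i)%N.
Proof.
rewrite mem_undup /psz /trow size_filter -has_count.
apply/mapP/hasP => [[s hs ->]|[s hs /eqP <-]]; first by exists s.
by exists s.
Qed.

Lemma size_rows S : size S = \sum_(i <- Uy S) psz S i.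
Proof.
rewrite -sum1_size (sum_rows _ (undup_uniq _) (@Uy_mem S)).
by apply: eq_bigr => i _; rewrite sum1_size.
Qed.

Lemma sum0_each (I : eqType) (r : seq I) (f : I -> int) :
  (forall i, i \in r -> 0 <= f i) -> \sum_(i <- r) f i <= 0 ->
  forall i, i \in r -> f i = 0.
Proof.
elim: r => [|a r IH] // H; rewrite big_cons => hs i.
have ha := H a (mem_head _ _).
have hr : 0 <= \sum_(j <- r) f j.
  by rewrite big_seq; apply: sumr_ge0 => j hj; apply: H; rewrite inE hj orbT.
rewrite inE => /orP [/eqP ->|hi].
  by move: hs hr; set u := \sum_(_ <- _) _; lia.
apply: IH => //; first by move=> j hj; apply: H; rewrite inE hj orbT.
by move: hs hr; set u := \sum_(_ <- _) _; lia.
Qed.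

Lemma cost_le S T : cost S <= cost T -> tot S <= tot T.
Proof.
rewrite /cost -/(tot S) -/(tot T) ler_pM2r ?invr_gt0 // ler_int.
by [].
Qed.

Arguments sum0_each {I r f}.
Arguments cost_le {S T}.
Arguments tot_rows {S Us}.

Lemma rows_opt n S : optimal n S -> forall i j, i \in Uy S -> j \in Uy S ->
  D (Xr S i) (Xr S j) = mm (psz S i) (psz S j).
Proof.
move=> [[uS sS] hopt].
set T := town_of (Uy S) (psz S).
have uU : uniq (Uy S) by apply: undup_uniq.
have hT : is_town n T.
  split; first exact: town_uniq.
  by rewrite town_size -sS size_rows.
have := cost_le (hopt T hT).
rewrite (tot_rows uU (@Uy_mem S)) (tot_rows uU (@town_mem _ _)).
have eT : forall i, i \in Uy S -> Xr T i = J (psz S i) /\ psz T i = psz S i.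
  move=> i hi; rewrite /Xr /psz town_trow // /blk size_map -map_comp map_id.
  by rewrite size_Iv.
set g := fun i j => D (Xr S i) (Xr S j) - mm (psz S i) (psz S j).
have hg : forall i j, i \in Uy S -> j \in Uy S -> W S i j - W T i j = g i j.
  move=> i j hi hj; rewrite !W_eq (eT i hi).1 (eT i hi).2 (eT j hj).1 (eT j hj).2.
  rewrite /g /mm; lia.
have hg0 : forall i j, i \in Uy S -> j \in Uy S -> 0 <= g i j.
  move=> i j _ _; rewrite /g subr_ge0 -/(psz S i) -/(psz S j).
  rewrite /psz -!(size_map fst) -!/(Xr _ _).
  by apply: lb => //; apply: uniq_Xr.
rewrite -subr_le0 -sumrB => H.
have hnn : forall i, i \in Uy S -> 0 <= \sum_(j <- Uy S) W S i j - \sum_(j <- Uy S) W T i j.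
  move=> i hi; rewrite -sumrB big_seq; apply: sumr_ge0 => j hj.
  by rewrite hg // hg0.
have H1 := sum0_each hnn H.
move=> i j hi hj.
have := H1 i hi; rewrite -sumrB => H2.
have : g i j = 0.
  have hnn2 : forall k, k \in Uy S -> 0 <= W S i k - W T i k.
    by move=> k hk; rewrite hg // hg0.
  by rewrite -hg //; apply: (sum0_each hnn2 _ j hj); rewrite H2.
by rewrite /g; lia.
Qed.

Lemma align (Us : seq int) (h : int -> int) (od : int -> bool) :
  (forall i j, i \in Us -> j \in Us ->
     `|(2 * h i + (nat_of_bool (od i))%:Z) - (2 * h j + (nat_of_bool (od j))%:Z)| <= 1) ->
  exists (a e : int), (e = 1 \/ e = -1) /\ forall i, i \in Us ->
    (od i -> h i = a) /\ (~~ od i -> 2 * h i - 1 = 2 * a + e).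
Proof.
move=> H.
case: (boolP (has od Us)) => [/hasP [i0 hi0 o0]|/hasPn no].
  exists (h i0).
  case: (boolP (has (predC od) Us)) => [/hasP [j0 hj0 /= o1]|/hasPn ne].
    exists (2 * h j0 - 1 - 2 * h i0).
    have := H i0 j0 hi0 hj0; rewrite o0 (negbTE o1) /= => h0.
    split; first lia.
    move=> i hi; split => oi.
      by have := H i i0 hi hi0; rewrite oi o0 /=; lia.
    by have := H i j0 hi hj0; rewrite (negbTE oi) (negbTE o1) /=; lia.
  exists 1; split; first by left.
  move=> i hi; split => oi.
    by have := H i i0 hi hi0; rewrite oi o0 /=; lia.
  by have := ne i hi; rewrite /= oi.
case: Us H no => [|j0 Us] H no.
  by exists 0, 1; split=> //; left.
have o0 := no j0 (mem_head _ _).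
exists (h j0 - 1), 1; split; first by left.
move=> i hi; split => oi; first by have := no i hi; rewrite oi.
by have := H i j0 hi (mem_head _ _); rewrite (negbTE oi) (negbTE o0) /=; lia.
Qed.

Lemma rat_half (z w : int) : z = 2 * w -> (z%:~R : rat) / 2 = w%:~R.
Proof. by move=> ->; rewrite intrM /=; field. Qed.

Lemma rat_half2 (z a e : int) : z = 2 * a + e -> (z%:~R : rat) / 2 = a%:~R + e%:~R / 2.
Proof. by move=> ->; rewrite intrD intrM /=; field. Qed.

Definition rowcond (S : seq point) (a : int) (e : rat) : Prop :=
  forall i : int,
    (odd (size (trow S i)) -> (row_center S i).1 = a%:~R) /\
    (~~ odd (size (trow S i)) -> (0 < size (trow S i))%N ->
       (row_center S i).1 = a%:~R + e).

Definition colcond (S : seq point) (b : int) (f : rat) : Prop :=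
  forall i : int,
    (odd (size (tcol S i)) -> (column_center S i).2 = b%:~R) /\
    (~~ odd (size (tcol S i)) -> (0 < size (tcol S i))%N ->
       (column_center S i).2 = b%:~R + f).

Lemma rows_main n S : optimal n S ->
  exists (a : int) (e : rat), (e = 1/2 \/ e = -(1/2)) /\ rowcond S a e.
Proof.
move=> hopt; have [[uS _] _] := hopt.
have hro := rows_opt _ _ hopt.
set l := fun i => seq_min (Xr S i).
have hsh : forall i, i \in Uy S -> perm_eq (Xr S i) (Iv (l i) (psz S i)).
  move=> i hi; have := diag _ (uniq_Xr _ i uS).
  rewrite /Xr size_map -/(psz S i) -/(Xr S i) => H; apply: H.
    by rewrite -Uy_psz.
  by rewrite hro.
have hcr : forall i j, i \in Uy S -> j \in Uy S ->
    `|(2 * l i + (psz S i)%:Z) - (2 * l j + (psz S j)%:Z)| <= 1.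
  move=> i j hi hj; rewrite leNgt; apply/negP => hc.
  have := strict (psz S i + psz S j) (psz S i) (psz S j) (l i) (l j) (leqnn _).
  rewrite -!Uy_psz => /(_ hi hj) H.
  have {}H := H ltac:(lia).
  move: H; rewrite -(D_perm (hsh i hi) (hsh j hj)) hro //; lia.
have hal : forall i j, i \in Uy S -> j \in Uy S ->
   `|(2 * (l i + ((psz S i)./2)%:Z) + (nat_of_bool (odd (psz S i)))%:Z) -
     (2 * (l j + ((psz S j)./2)%:Z) + (nat_of_bool (odd (psz S j)))%:Z)| <= 1.
  move=> i j hi hj; have := hcr i j hi hj.
  have := odd_double_half (psz S i); have := odd_double_half (psz S j).
  case: (odd (psz S i)); case: (odd (psz S j)) => /=; lia.
have [a [e [he H]]] := align (Uy S) (fun i => l i + ((psz S i)./2)%:Z)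
                             (fun i => odd (psz S i)) hal.
exists a, (e%:~R / 2); split.
    by case: he => ->; [left|right].
  move=> i; rewrite -/(psz S i).
  case: (boolP (i \in Uy S)) => hi; last first.
    by move: hi; rewrite Uy_psz -leqNgt leqn0 => /eqP ->.
  have hp : (0 < psz S i)%N by rewrite -Uy_psz.
  have [e1 e2] := seq_min_Iv _ _ _ hp (hsh i hi).
  have hodd := odd_double_half (psz S i).
  have [H1 H2] := H i hi.
  rewrite /row_center /= -/(Xr S i) e1 e2.
  split=> oi.
    apply: rat_half; have := H1 oi; move: hodd; rewrite oi /=; lia.
  move=> _; apply: rat_half2; have := H2 oi; move: hodd; rewrite (negbTE oi) /=; lia.
Qed.

Lemma cost_map (f : point -> point) S :
  (forall s t, l1dist (f s) (f t) = l1dist s t) -> cost (map f S) = cost S.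
Proof.
move=> hf; rewrite /cost big_map; congr (_ %:~R / _); apply: eq_bigr => s _.
by rewrite big_map; apply: eq_bigr => t _; rewrite hf.
Qed.

Lemma town_map (f : point -> point) n S : injective f -> is_town n S -> is_town n (map f S).
Proof. by move=> hf [uS sS]; split; rewrite ?map_inj_uniq ?size_map. Qed.

Lemma opt_map (f : point -> point) n S : injective f ->
  (forall s t, l1dist (f s) (f t) = l1dist s t) -> optimal n S -> optimal n (map f S).
Proof.
move=> fi hf [tS hS]; split; first exact: town_map.
move=> T hT; rewrite cost_map //; apply: (le_trans (hS _ (town_map _ _ _ fi hT))).
by rewrite cost_map.
Qed.

Definition swp (p : point) : point := (p.2, p.1).
Definition tr (u v : int) (p : point) : point := (p.1 + u, p.2 + v).

Lemma seq_min_mono (f : int -> int) xs : {mono f : x y / x <= y} -> xs != [::] ->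
  seq_min (map f xs) = f (seq_min xs).
Proof.
move=> hf hne; have [h1 h2] := seq_minP _ hne.
apply: seq_min_eq; first exact: map_f.
by move=> y /mapP [x hx ->]; rewrite hf h2.
Qed.

Lemma seq_max_mono (f : int -> int) xs : {mono f : x y / x <= y} -> xs != [::] ->
  seq_max (map f xs) = f (seq_max xs).
Proof.
move=> hf hne; have [h1 h2] := seq_maxP _ hne.
apply: seq_max_eq; first exact: map_f.
by move=> y /mapP [x hx ->]; rewrite hf h2.
Qed.

Lemma seq_min_opp xs : xs != [::] -> seq_min (map (fun x => - x) xs) = - seq_max xs.
Proof.
move=> hne; have [h1 h2] := seq_maxP _ hne.
apply: seq_min_eq; first exact: map_f.
by move=> y /mapP [x hx ->]; rewrite lerN2 h2.
Qed.

Lemma seq_max_opp xs : xs != [::] -> seq_max (map (fun x => - x) xs) = - seq_min xs.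
Proof.
move=> hne; have [h1 h2] := seq_minP _ hne.
apply: seq_max_eq; first exact: map_f.
by move=> y /mapP [x hx ->]; rewrite lerN2 h2.
Qed.

Lemma trow_swp S i : trow (map swp S) i = map swp (tcol S i).
Proof. by rewrite /trow /tcol filter_map. Qed.

Lemma trow_rot S i : trow (map rot90 S) i = map rot90 (tcol S i).
Proof. by rewrite /trow /tcol filter_map. Qed.

Lemma tcol_rot S j : tcol (map rot90 S) j = map rot90 (trow S (- j)).
Proof.
rewrite /trow /tcol filter_map; congr map; apply: eq_filter => p /=.
by rewrite -eqr_oppLR.
Qed.

Lemma trow_tr S u v i : trow (map (tr u v) S) i = map (tr u v) (trow S (i - v)).
Proof.
rewrite /trow filter_map; congr map; apply: eq_filter => p /=.
by apply/eqP/eqP; lia.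
Qed.

Lemma tcol_tr S u v i : tcol (map (tr u v) S) i = map (tr u v) (tcol S (i - u)).
Proof.
rewrite /tcol filter_map; congr map; apply: eq_filter => p /=.
by apply/eqP/eqP; lia.
Qed.

Lemma col_of_swp S b f : rowcond (map swp S) b f -> colcond S b f.
Proof.
move=> H i; have [H1 H2] := H i; rewrite trow_swp size_map in H1 H2.
have e : (column_center S i).2 = (row_center (map swp S) i).1.
  by rewrite /column_center /row_center trow_swp -map_comp.
by rewrite e; split.
Qed.

Lemma rot_row S b f : colcond S b f -> rowcond (map rot90 S) (- b) (- f).
Proof.
move=> H i; have [H1 H2] := H i; rewrite trow_rot size_map.
have e : size (tcol S i) != 0%N ->
   (row_center (map rot90 S) i).1 = - (column_center S i).2.
  move=> hs; have hne : map snd (tcol S i) != [::] by rewrite -size_eq0 size_map.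
  rewrite /column_center /row_center /= trow_rot -map_comp.
  have -> : [seq (fst \o rot90) x | x <- tcol S i] = map (fun x => - x) (map snd (tcol S i)).
    by rewrite -map_comp.
  rewrite seq_min_opp // seq_max_opp // -opprD rmorphN /= mulNr.
  by rewrite addrC.
split=> ho.
  rewrite e ?H1 ?rmorphN //; by case: (size _) ho.
move=> hp; rewrite e ?H2 ?rmorphN ?opprD //; by case: (size _) hp.
Qed.

Lemma rot_col S a e : rowcond S a e -> colcond (map rot90 S) a e.
Proof.
move=> H j; have [H1 H2] := H (- j); rewrite tcol_rot size_map.
have -> : (column_center (map rot90 S) j).2 = (row_center S (- j)).1.
  by rewrite /column_center /row_center /= tcol_rot -map_comp.
by split.
Qed.

Lemma tr_row S u v a e : rowcond S a e -> rowcond (map (tr u v) S) (a + u) e.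
Proof.
move=> H i; have [H1 H2] := H (i - v); rewrite trow_tr size_map.
have ee : size (trow S (i - v)) != 0%N ->
   (row_center (map (tr u v) S) i).1 = (row_center S (i - v)).1 + u%:~R.
  move=> hs; have hne : map fst (trow S (i - v)) != [::] by rewrite -size_eq0 size_map.
  rewrite /row_center /= trow_tr -map_comp.
  have -> : [seq (fst \o tr u v) x | x <- trow S (i - v)] =
            map (fun x => x + u) (map fst (trow S (i - v))) by rewrite -map_comp.
  have hm : {mono (fun x => x + u) : x y / x <= y} by move=> x y; rewrite lerD2r.
  rewrite seq_min_mono // seq_max_mono //.
  by rewrite !rmorphD /=; field.
split=> ho.
  rewrite ee ?H1 ?rmorphD //; by case: (size _) ho.
move=> hp; rewrite ee ?H2 ?rmorphD //; last by case: (size _) hp.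
by rewrite addrAC.
Qed.

Lemma tr_col S u v b f : colcond S b f -> colcond (map (tr u v) S) (b + v) f.
Proof.
move=> H i; have [H1 H2] := H (i - u); rewrite tcol_tr size_map.
have ee : size (tcol S (i - u)) != 0%N ->
   (column_center (map (tr u v) S) i).2 = (column_center S (i - u)).2 + v%:~R.
  move=> hs; have hne : map snd (tcol S (i - u)) != [::] by rewrite -size_eq0 size_map.
  rewrite /column_center /= tcol_tr -map_comp.
  have -> : [seq (snd \o tr u v) x | x <- tcol S (i - u)] =
            map (fun x => x + v) (map snd (tcol S (i - u))) by rewrite -map_comp.
  have hm : {mono (fun x => x + v) : x y / x <= y} by move=> x y; rewrite lerD2r.
  rewrite seq_min_mono // seq_max_mono //.
  by rewrite !rmorphD /=; field.
split=> ho.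
  rewrite ee ?H1 ?rmorphD //; by case: (size _) ho.
move=> hp; rewrite ee ?H2 ?rmorphD //; last by case: (size _) hp.
by rewrite addrAC.
Qed.

Lemma l1_rot s t : l1dist (rot90 s) (rot90 t) = l1dist s t.
Proof. rewrite /l1dist /=; lia. Qed.

Lemma l1_iter k s t : l1dist (iter k rot90 s) (iter k rot90 t) = l1dist s t.
Proof. by elim: k => [|k IH] //=; rewrite l1_rot. Qed.

Lemma l1_rigid k a b s t : l1dist (rigid k a b s) (rigid k a b t) = l1dist s t.
Proof.
rewrite /rigid -(l1_iter k s t) /l1dist /=.
set p := iter k rot90 s; set q := iter k rot90 t; lia.
Qed.

Lemma l1_swp s t : l1dist (swp s) (swp t) = l1dist s t.
Proof. rewrite /l1dist /=; lia. Qed.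

Lemma swp_inj : injective swp.
Proof. by move=> [x y] [x' y'] [-> ->]. Qed.

Lemma step S a e b f : rowcond S a e -> colcond S b f ->
  rowcond (map rot90 S) (- b) (- f) /\ colcond (map rot90 S) a e.
Proof. by move=> hr hc; split; [apply: rot_row | apply: rot_col]. Qed.

Lemma map_iterS k S : map (iter k.+1 rot90) S = map rot90 (map (iter k rot90) S).
Proof. by rewrite -map_comp. Qed.

Lemma map_iter0 S : map (iter 0 rot90) S = S.
Proof. exact: map_id. Qed.

Lemma finish S k a1 b1 : (k < 4)%N ->
  rowcond (map (iter k rot90) S) a1 (- (1/2)) ->
  colcond (map (iter k rot90) S) b1 (- (1/2)) ->
  (exists (k : nat) (a b : int),
     let S' := map (rigid k a b) S in
     (k < 4)%N /\ cost S' = cost S /\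
     forall i : int,
       (odd (size (trow S' i)) -> (row_center S' i).1 = 0) /\
       (~~ odd (size (trow S' i)) -> (0 < size (trow S' i))%N ->
          (row_center S' i).1 = -(1/2)) /\
       (odd (size (tcol S' i)) -> (column_center S' i).2 = 0) /\
       (~~ odd (size (tcol S' i)) -> (0 < size (tcol S' i))%N ->
          (column_center S' i).2 = -(1/2))).
Proof.
move=> hk hr hc; exists k, (- a1), (- b1) => S'.
have eS : S' = map (tr (- a1) (- b1)) (map (iter k rot90) S).
  by rewrite /S' -map_comp.
split=> //; split; first by rewrite /S' cost_map // => s t; apply: l1_rigid.
move=> i; rewrite eS.
have [H1 H2] := tr_row _ (- a1) (- b1) _ _ hr i.
have [H3 H4] := tr_col _ (- a1) (- b1) _ _ hc i.
rewrite addrN add0r in H1 H2; rewrite addrN add0r in H3 H4.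
by [].
Qed.

Theorem lemma3 (n : nat) (S : seq point) :
  optimal n S ->
  (exists (a : int) (e : rat), (e = 1/2 \/ e = -(1/2)) /\
     forall i : int,
       (odd (size (trow S i)) -> (row_center S i).1 = a%:~R) /\
       (~~ odd (size (trow S i)) -> (0 < size (trow S i))%N ->
          (row_center S i).1 = a%:~R + e)) /\
  (exists (b : int) (f : rat), (f = 1/2 \/ f = -(1/2)) /\
     forall i : int,
       (odd (size (tcol S i)) -> (column_center S i).2 = b%:~R) /\
       (~~ odd (size (tcol S i)) -> (0 < size (tcol S i))%N ->
          (column_center S i).2 = b%:~R + f)) /\
  (exists (k : nat) (a b : int),
     let S' := map (rigid k a b) S in
     (k < 4)%N /\ cost S' = cost S /\
     forall i : int,
       (odd (size (trow S' i)) -> (row_center S' i).1 = 0) /\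
       (~~ odd (size (trow S' i)) -> (0 < size (trow S' i))%N ->
          (row_center S' i).1 = -(1/2)) /\
       (odd (size (tcol S' i)) -> (column_center S' i).2 = 0) /\
       (~~ odd (size (tcol S' i)) -> (0 < size (tcol S' i))%N ->
          (column_center S' i).2 = -(1/2))).
Proof.
move=> hopt.
have [a [e [he hr]]] := rows_main _ _ hopt.
have hopt2 := opt_map _ _ _ swp_inj l1_swp hopt.
have [b [f [hf hc']]] := rows_main _ _ hopt2.
have hc := col_of_swp _ _ _ hc'.
split; first by exists a, e.
split; first by exists b, f.
case: he => ee; case: hf => ef; subst e f.
-
  have [r1 c1] := step _ _ _ _ _ hr hc.
  have [r2 c2] := step _ _ _ _ _ r1 c1.
  apply: (finish S 2 (- a) (- b)) => //.
    by rewrite !map_iterS map_iter0.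
  by rewrite !map_iterS map_iter0.
-
  have [r1 c1] := step _ _ _ _ _ hr hc.
  have [r2 c2] := step _ _ _ _ _ r1 c1.
  have [r3 c3] := step _ _ _ _ _ r2 c2.
  apply: (finish S 3 b (- a)) => //.
    by move: r3; rewrite !map_iterS map_iter0 !opprK.
  by rewrite !map_iterS map_iter0.
-
  have [r1 c1] := step _ _ _ _ _ hr hc.
  apply: (finish S 1 (- b) (a)) => //.
- apply: (finish S 0 (a) (b)) => //.
    by rewrite map_iter0.
  by rewrite map_iter0.
Qed.
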